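(* Under the hypotheses of Lemma C2 (Pauli-spanned Cartan decomposition $\mathfrak g=\mathfrak k\oplus\mathfrak m$; pairwise commuting Pauli strings $b_1,\dots,b_d\in\tilde{\mathfrak m}$ in one connected component of the frustration graph of $\mathfrak g$; $2\le r\le d$ with $\tilde{\mathfrak k}^{r-1}_{1\dots r-2}$ non-empty), if in addition $\tilde{\mathfrak k}^r_{1\dots r-2}$ is non-empty, then $|\tilde{\mathfrak k}^{r-1}_{1\dots r-2}|=|\tilde{\mathfrak k}^r_{1\dots r-2}|$; equivalently, $|\tilde{\mathfrak k}^{r-1}_{1\dots r-2,r}|=|\tilde{\mathfrak k}^r_{1\dots r-1}|$.
   Context: Pauli strings on $n$ qubits are tensor products of $I,X,Y,Z$, not all identity; two Pauli strings either commute or anticommute. A Pauli-spanned Cartan decomposition is $\mathfrak g=\mathfrak k\oplus\mathfrak m\subseteq\mathfrak{su}(2^n)$ with $\mathfrak k=\mathrm{span}_{i\mathbb R}\tilde{\mathfrak k}$, $\mathfrak m=\mathrm{span}_{i\mathbb R}\tilde{\mathfrak m}$, $\mathfrak g=\mathrm{span}_{i\mathbb R}\tilde{\mathfrak g}$ with $\tilde{\mathfrak g}=\tilde{\mathfrak k}\sqcup\tilde{\mathfrak m}$ the set of all Pauli strings (up to phase) $\sigma$ with $i\sigma\in\mathfrak g$, and $[\mathfrak k,\mathfrak k]\subseteq\mathfrak k$, $[\mathfrak m,\mathfrak m]\subseteq\mathfrak k$, $[\mathfrak k,\mathfrak m]\subseteq\mathfrak m$. The frustration graph of $\mathfrak g$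 has vertex set $\tilde{\mathfrak g}$, with edges between anticommuting pairs. For disjoint index lists, $\tilde{\mathfrak k}^{i_1i_2\dots}_{j_1j_2\dots}$ is the set of $k\in\tilde{\mathfrak k}$ anticommuting with every $b_{i_p}$ and commuting with every $b_{j_q}$ (no condition on other indices). *)

(* Defs.v *)
From mathcomp Require Import all_boot.
Set Implicit Arguments. Unset Strict Implicit. Unset Printing Implicit Defensive.

(* Single-qubit Pauli letters up to phase, encoded in 'I_4:
   0 = I, 1 = X, 2 = Y, 3 = Z. *)
Definition pauli1 := 'I_4.

Definition anticomm1 (a b : pauli1) : bool :=
  [&& (val a != 0), (val b != 0) & (a != b)].

(* Product of single-qubit Paulis up to phase:  XY ~ Z, XZ ~ Y, YZ ~ X, PP = I. *)
Definition pmul1 (a b : pauli1) : pauli1 :=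
  inord (if val a == 0 then val b else if val b == 0 then val a
         else if a == b then 0 else 6 - val a - val b).

Definition pstring (n : nat) := {ffun 'I_n -> pauli1}.

(* The all-identity string (not a Pauli string in the paper's sense). *)
Definition pid (n : nat) : pstring n := [ffun => ord0].

Definition anticomm n (s t : pstring n) : bool :=
  odd #|[set i | anticomm1 (s i) (t i)]|.

(* Product of Pauli strings up to phase (the commutator [s,t] of anticommuting
   strings is a nonzero multiple of this string). *)
Definition pmul n (s t : pstring n) : pstring n := [ffun i => pmul1 (s i) (t i)].

(* Pauli-spanned Cartan decomposition g = k (+) m, given by the Pauli sets
   Kt = k~ and Mt = m~ (disjoint, non-identity strings). Since the Pauli strings
   are linearly independent and [i s, i t] is 0 if s,t commute and a nonzero
   multiple of i (s t) otherwise, the bracket conditions on the i R-spans are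
   exactly the following closure conditions. *)
Definition pauli_cartan n (Kt Mt : {set pstring n}) : Prop :=
  [/\ [disjoint Kt & Mt],
      (forall s, s \in Kt :|: Mt -> s != pid n),
      (forall s t, s \in Kt -> t \in Kt -> anticomm s t -> pmul s t \in Kt),
      (forall s t, s \in Mt -> t \in Mt -> anticomm s t -> pmul s t \in Kt) &
      (forall s t, s \in Kt -> t \in Mt -> anticomm s t -> pmul s t \in Mt)].

Definition frustration n (Kt Mt : {set pstring n}) : rel (pstring n) :=
  fun s t => [&& s \in Kt :|: Mt, t \in Kt :|: Mt & anticomm s t].

(* k~^{A}_{B}: elements of Kt anticommuting with every b_i (i in A) and
   commuting with every b_j (j in B). Indices are the paper's 1-based labels:
   the label of i : 'I_d is i.+1. *)
Definition ktil n d (Kt : {set pstring n}) (b : 'I_d -> pstring n)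
    (A B : pred nat) : {set pstring n} :=
  [set k in Kt | [forall i : 'I_d, (i.+1 \in A) ==> anticomm k (b i)]
              && [forall i : 'I_d, (i.+1 \in B) ==> ~~ anticomm k (b i)]].

Definition upto (m : nat) : pred nat := fun j => (0 < j) && (j <= m).

(* Main.v *)
Require Import Defs.
From mathcomp Require Import all_boot zify.
Set Implicit Arguments. Unset Strict Implicit. Unset Printing Implicit Defensive.
Lemma I4P (P : 'I_4 -> Prop) : P (@Ordinal 4 0 isT) -> P (@Ordinal 4 1 isT) -> P (@Ordinal 4 2 isT) -> P (@Ordinal 4 3 isT) -> forall a, P a.
Proof.
move=> h0 h1 h2 h3 [[|[|[|[|m]]]] hm] //.
- by rewrite (bool_irrelevance hm isT).
- by rewrite (bool_irrelevance hm isT).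
- by rewrite (bool_irrelevance hm isT).
- by rewrite (bool_irrelevance hm isT).
Qed.
Definition pm (x y : nat) : nat := if x == 0 then y else if y == 0 then x else if x == y then 0 else 6 - x - y.
Lemma pmul1E a b : nat_of_ord (pmul1 a b) = pm a b.
Proof.
rewrite /pmul1 inordK //; move: a b; do 2!apply: I4P; by [].
Qed.
Definition an (x y : nat) : bool := [&& x != 0, y != 0 & x != y].
Lemma an1E a b : anticomm1 a b = an a b.
Proof. by []. Qed.
Goal forall a b c : pauli1,  anticomm1 (pmul1 a b) c = anticomm1 a c (+) anticomm1 b c.
Proof. by do 3!apply: I4P; rewrite !an1E !pmul1E. Qed.
Lemma s_acM (a b c : pauli1) : anticomm1 (pmul1 a b) c = anticomm1 a c (+) anticomm1 b c.
Proof. by move: a b c; do 3!apply: I4P; rewrite !an1E !pmul1E. Qed.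
Lemma s_acC (a b : pauli1) : anticomm1 a b = anticomm1 b a.
Proof. by move: a b; do 2!apply: I4P. Qed.
Lemma s_acss (a : pauli1) : anticomm1 a a = false.
Proof. by move: a; apply: I4P. Qed.
Lemma s_pmulK (a b : pauli1) : pmul1 (pmul1 a b) b = a.
Proof. by move: a b; do 2!apply: I4P; apply/val_inj; rewrite /= !pmul1E. Qed.
Lemma s_pmulC (a b : pauli1) : pmul1 a b = pmul1 b a.
Proof. by move: a b; do 2!apply: I4P; apply/val_inj; rewrite /= !pmul1E. Qed.
Lemma s_swap1 (a b c : pauli1) : pmul1 (pmul1 a c) (pmul1 (pmul1 c a) b) = b.
Proof. by move: a b c; do 3!apply: I4P; apply/val_inj; rewrite /= !pmul1E. Qed.
Lemma s_swap2 (a b c : pauli1) : pmul1 (pmul1 b c) (pmul1 (pmul1 c a) b) = a.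
Proof. by move: a b c; do 3!apply: I4P; apply/val_inj; rewrite /= !pmul1E. Qed.

Lemma odd_card_set n (P : pred 'I_n) :
  odd #|[set i | P i]| = \big[addb/false]_(i < n) P i.
Proof.
rewrite -sum1_card (big_morph odd oddD (erefl (odd 0))) big_mkcond /=.
by apply: eq_bigr => i _; rewrite inE; case: (P i).
Qed.

Section S.
Variable n : nat.
Implicit Types s t u : pstring n.

Lemma acC s t : anticomm s t = anticomm t s.
Proof. by rewrite /anticomm; congr odd; apply: eq_card => i; rewrite !inE s_acC. Qed.

Lemma acMl s t u : anticomm (pmul s t) u = anticomm s u (+) anticomm t u.
Proof.
rewrite /anticomm !odd_card_set -big_split /=.
by apply: eq_bigr => i _; rewrite ffunE s_acM.
Qed.

Lemma acMr s t u : anticomm u (pmul s t) = anticomm u s (+) anticomm u t.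
Proof. by rewrite acC acMl (acC s) (acC t). Qed.

Lemma acss s : anticomm s s = false.
Proof.
rewrite /anticomm (_ : [set i | _] = set0) ?cards0 //.
by apply/setP => i; rewrite !inE s_acss.
Qed.

Lemma pmulK s t : pmul (pmul s t) t = s.
Proof. by apply/ffunP => i; rewrite !ffunE s_pmulK. Qed.
Lemma pmulC s t : pmul s t = pmul t s.
Proof. by apply/ffunP => i; rewrite !ffunE s_pmulC. Qed.
Lemma swap1 u v e : pmul (pmul u e) (pmul (pmul e u) v) = v.
Proof. by apply/ffunP => i; rewrite !ffunE s_swap1. Qed.
Lemma swap2 u v e : pmul (pmul v e) (pmul (pmul e u) v) = u.
Proof. by apply/ffunP => i; rewrite !ffunE s_swap2. Qed.
End S.

Definition Ce n (e s : pstring n) := if anticomm s e then pmul s e else s.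

Lemma Ce_ac n (e s t : pstring n) : anticomm (Ce e s) (Ce e t) = anticomm s t.
Proof.
rewrite /Ce; case hs: (anticomm s e); case ht: (anticomm t e);
  rewrite ?acMl ?acMr ?acss ?(acC e s) ?(acC e t) ?(acC t s) ?hs ?ht;
  by case: (anticomm s t).
Qed.

Lemma CeK n (e : pstring n) : involutive (Ce e).
Proof.
move=> s; rewrite /Ce; case hs: (anticomm s e); last by rewrite hs.
by rewrite acMl hs acss /= pmulK.
Qed.

Lemma swap_le n (Kt Mt : {set pstring n}) (I : finType) (w : I -> pstring n)
   (P : pred I) (u v e : pstring n) (Q : bool -> bool) :
  pauli_cartan Kt Mt -> e \in Kt -> u \in Mt -> v \in Mt ->
  anticomm e u -> anticomm e v -> ~~ anticomm u v ->
  (forall i, P i -> [&& ~~ anticomm (w i) e, ~~ anticomm (w i) u & ~~ anticomm (w i) v]) ->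
  #|[set s in Kt | [&& anticomm s u, Q (anticomm s v) & [forall i, P i ==> ~~ anticomm s (w i)]]]|
  <= #|[set s in Kt | [&& anticomm s v, Q (anticomm s u) & [forall i, P i ==> ~~ anticomm s (w i)]]]|.
Proof.
case=> _ _ KK MM KM eK uM vM eu ev uv hw.
have euM : pmul e u \in Mt by apply: KM.
have k2K : pmul (pmul e u) v \in Kt.
  by apply: MM => //; rewrite acMl ev (negbTE uv).
set k2 := pmul (pmul e u) v.
pose F s := Ce k2 (Ce e s).
have Finj : injective F by move=> x y /(can_inj (CeK k2)) /(can_inj (CeK e)).
have Fac x y : anticomm (F x) (F y) = anticomm x y by rewrite /F !Ce_ac.
have CeKt x y : x \in Kt -> y \in Kt -> Ce y x \in Kt.
  by move=> hx hy; rewrite /Ce; case: ifP => // h; apply: KK.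
have FK x : x \in Kt -> F x \in Kt by move=> hx; apply: (CeKt) => //; apply: (CeKt).
have ue : anticomm u e by rewrite acC.
have ve : anticomm v e by rewrite acC.
have vu : ~~ anticomm v u by rewrite acC.
have Fu : F u = v.
  rewrite /F {2}/Ce ue /Ce /k2 !acMl !acMr !acss ue (negbTE uv) eu ev /=.
  by rewrite swap1.
have Fv : F v = u.
  rewrite /F {2}/Ce ve /Ce /k2 !acMl !acMr !acss ve (negbTE vu) eu ev /=.
  by rewrite swap2.
have Fw i : P i -> F (w i) = w i.
  move=> /hw /and3P[h1 h2 h3].
  by rewrite /F /Ce (negbTE h1) /k2 !acMr (negbTE h1) (negbTE h2) (negbTE h3).
rewrite -(card_imset _ Finj); apply: subset_leq_card; apply/subsetP => y.
case/imsetP => x; rewrite !inE => /and4P[xK xu xv xw] ->.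
rewrite FK //= -[v in anticomm (F x) v]Fu -[u in Q (anticomm (F x) u)]Fv !Fac xu xv /=.
apply/forallP => i; apply/implyP => Pi.
by rewrite -(Fw i Pi) Fac (implyP (forallP xw i) Pi).
Qed.

Definition er n (S : {set pstring n}) : rel (pstring n) :=
  fun s t => [&& s \in S, t \in S & anticomm s t].

Lemma er_sym n (S : {set pstring n}) : symmetric (er S).
Proof. by move=> s t; rewrite /er acC andbCA. Qed.

Lemma er_csym n (S : {set pstring n}) : connect_sym (er S).
Proof. exact/sym_connect_sym/er_sym. Qed.

Lemma connS_in n (S : {set pstring n}) x y : connect (er S) x y -> x \in S -> y \in S.
Proof.
case/connectP => p; elim: p x => [|z p IH] x /=; first by move=> _ ->.
by move=> /andP[/and3P[_ hz _] hp] e _; exact: IH hp e hz.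
Qed.

Lemma nbr n (S : {set pstring n}) x y :
  connect (er S) x y -> (exists z, er S x z) -> exists z, er S y z.
Proof.
case/connectP => p hp ->; case/lastP: p hp => [|p z] hp //= _.
exists (last x p); rewrite last_rcons er_sym.
by move: hp; rewrite rcons_path => /andP[].
Qed.

Lemma choose_pi n (S Z : {set pstring n}) bb s z t (d1 d2 : bool) :
  (forall s t, s \in S -> t \in S -> anticomm s t -> pmul s t \in S) ->
  (forall s, (s \in Z) = (s \in S) && ~~ anticomm s bb) ->
  er Z s z -> t \in S -> anticomm t bb -> anticomm s t ->
  exists p, [/\ p \in S, anticomm p bb, (anticomm p s != d1) || (anticomm p z != d2)
     & forall y, ~~ anticomm s y -> ~~ anticomm z y -> anticomm p y = anticomm t y].
Proof.
move=> hcl hZ /and3P[]; rewrite !hZ => /andP[sS sb] /andP[zS zb] sz tS tb st.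
have ts : anticomm t s by rewrite acC.
have zs : anticomm z s by rewrite acC.
case: (boolP (~~ d1 && d2)) => hd.
  exists t; split => //; case/andP: hd => /negbTE -> _; by rewrite ts.
suff [p [pS pb ps pz py]] : exists p, [/\ p \in S, anticomm p bb, anticomm p s = false,
   anticomm p z & forall y, ~~ anticomm s y -> ~~ anticomm z y -> anticomm p y = anticomm t y].
  exists p; split => //; rewrite ps pz; by move: hd; case: d1; case: d2.
case htz: (anticomm t z).
  exists (pmul t z); split.
  - exact: hcl.
  - by rewrite acMl tb (negbTE zb).
  - by rewrite acMl ts zs.
  - by rewrite acMl htz acss.
  - by move=> y _ zy; rewrite acMl (negbTE zy) addbF.
have szS : pmul s z \in S by exact: hcl.
have tsz : anticomm t (pmul s z) by rewrite acMr ts htz.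
exists (pmul t (pmul s z)); split.
- exact: hcl.
- by rewrite !acMl tb (negbTE sb) (negbTE zb).
- by rewrite !acMl ts acss zs.
- by rewrite !acMl htz sz acss.
- by move=> y sy zy; rewrite !acMl (negbTE zy) (negbTE sy) /= addbF.
Qed.

Lemma conn_restrict n (S Z : {set pstring n}) (bb x y : pstring n) :
  (forall s t, s \in S -> t \in S -> anticomm s t -> pmul s t \in S) ->
  bb \in S -> (forall s, (s \in Z) = (s \in S) && ~~ anticomm s bb) ->
  x \in Z -> y \in Z -> (exists z, er Z x z) -> (exists z, er Z y z) ->
  connect (er S) x y -> connect (er Z) x y.
Proof.
move=> hcl hb hZ xZ yZ nx ny hc.
case: (boolP (connect (er Z) x y)) => // nxy; suff: False by [].
have ZS s : s \in Z -> s \in S by rewrite hZ => /andP[].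
have Zb s : s \in Z -> ~~ anticomm s bb by rewrite hZ => /andP[].
have T a : a \in Z -> (exists s t, [/\ connect (er Z) a s, t \in S, anticomm t bb & anticomm s t])
    \/ (forall c, connect (er S) a c -> connect (er Z) a c).
  move=> aZ.
  case: (boolP [exists s, exists t, [&& connect (er Z) a s, t \in S, anticomm t bb & anticomm s t]]).
    by case/existsP => s /existsP[t /and4P[h1 h2 h3 h4]]; left; exists s, t.
  move=> hn; right => c hac.
  have cl : closed (er S) [pred s | connect (er Z) a s].
    apply: (intro_closed (er_csym S)) => s t /and3P[sS tS st]; rewrite !inE => has.
    have sZ : s \in Z by exact: connS_in has aZ.
    case: (boolP (anticomm t bb)) => tb.
      by move: hn; rewrite negb_exists => /forallP/(_ s); rewrite negb_exists => /forallP/(_ t);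
        rewrite has tS tb st.
    apply: (connect_trans has); apply: connect1; rewrite /er sZ st hZ tS tb.
    by [].
  by have := closed_connect cl hac; rewrite !inE connect0 => <-.
have cross a a' : connect (er Z) x a -> connect (er Z) y a' -> ~~ anticomm a a'.
  move=> xa ya'; apply/negP => aa'; move: nxy; apply/negP; rewrite negbK.
  have aZ := connS_in xa xZ; have a'Z := connS_in ya' yZ.
  apply: (connect_trans xa); apply: (connect_trans (y := a')).
    by apply: connect1; rewrite /er aZ a'Z.
  by rewrite er_csym.
case: (T x xZ) => [[s1 [t1 [xs1 t1S t1b s1t1]]]|hx]; last by rewrite (hx y hc) in nxy.
case: (T y yZ) => [[s2 [t2 [ys2 t2S t2b s2t2]]]|hy]; last first.
  by move: nxy; rewrite er_csym (hy x) // (er_csym S).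
have [z1 e1] := nbr xs1 nx.
have [z2 e2] := nbr ys2 ny.
have xz1 : connect (er Z) x z1 := connect_trans xs1 (connect1 e1).
have yz2 : connect (er Z) y z2 := connect_trans ys2 (connect1 e2).
have [p1 [p1S p1b hp1 cp1]] := choose_pi (anticomm t2 s1) (anticomm t2 z1) hcl hZ e1 t1S t1b s1t1.
have [p2 [p2S p2b hp2 cp2]] := choose_pi (anticomm t1 s2) (anticomm t1 z2) hcl hZ e2 t2S t2b s2t2.
have [w [wZ hw]] : exists w, w \in Z /\ forall a, a \in Z ->
    anticomm w a = anticomm p1 a (+) anticomm p2 a.
  case hp12: (anticomm p1 p2).
    exists (pmul p1 p2); split; last by move=> a _; rewrite acMl.
    by rewrite hZ hcl // acMl p1b p2b.
  have p2bS : pmul p2 bb \in S by exact: hcl.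
  have h12 : anticomm p1 (pmul p2 bb) by rewrite acMr hp12 p1b.
  exists (pmul p1 (pmul p2 bb)); split.
    by rewrite hZ hcl // !acMl p1b p2b acss.
  by move=> a aZ; rewrite !acMl (acC bb a) (negbTE (Zb a aZ)) addbF.
have s1Z := connS_in xs1 xZ; have z1Z := connS_in xz1 xZ.
have s2Z := connS_in ys2 yZ; have z2Z := connS_in yz2 yZ.
have e21 : anticomm p2 s1 = anticomm t2 s1 by apply: cp2; rewrite acC; exact: cross.
have e21z : anticomm p2 z1 = anticomm t2 z1 by apply: cp2; rewrite acC; exact: cross.
have e12 : anticomm p1 s2 = anticomm t1 s2 by apply: cp1; exact: cross.
have e12z : anticomm p1 z2 = anticomm t1 z2 by apply: cp1; exact: cross.
have w1 : anticomm w s1 || anticomm w z1.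
  rewrite !hw // e21 e21z; move: hp1.
  by case: (anticomm p1 s1); case: (anticomm t2 s1); case: (anticomm p1 z1); case: (anticomm t2 z1).
have w2 : anticomm w s2 || anticomm w z2.
  rewrite !hw // e12 e12z; move: hp2.
  by case: (anticomm p2 s2); case: (anticomm t1 s2); case: (anticomm p2 z2); case: (anticomm t1 z2).
have xw : connect (er Z) x w.
  case/orP: w1 => h.
    by apply: (connect_trans xs1); apply: connect1; rewrite /er s1Z wZ acC.
  by apply: (connect_trans xz1); apply: connect1; rewrite /er z1Z wZ acC.
have yw : connect (er Z) y w.
  case/orP: w2 => h.
    by apply: (connect_trans ys2); apply: connect1; rewrite /er s2Z wZ acC.
  by apply: (connect_trans yz2); apply: connect1; rewrite /er z2Z wZ acC.
by move: nxy; rewrite (connect_trans xw) // er_csym.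
Qed.

Lemma forallU d (a b c : pred 'I_d) (f : 'I_d -> bool) :
  (forall i, a i = b i || c i) ->
  [forall i, a i ==> f i] = [forall i, b i ==> f i] && [forall i, c i ==> f i].
Proof.
move=> e; apply/forallP/andP => [H|[H1 H2] i].
  by split; apply/forallP => i; apply/implyP => hi; apply: (implyP (H i)); rewrite e hi ?orbT.
rewrite e; apply/implyP => /orP[] hi; [exact: (implyP (forallP H1 i)) | exact: (implyP (forallP H2 i))].
Qed.

Lemma forall1 d (k : 'I_d) (f : 'I_d -> bool) : [forall i, (i == k) ==> f i] = f k.
Proof.
apply/forallP/idP => [H | fk i]; first by have := H k; rewrite eqxx.
by apply/implyP => /eqP ->.
Qed.

Lemma forall_eq d (a b : pred 'I_d) (f : 'I_d -> bool) :
  (forall i, a i = b i) -> [forall i, a i ==> f i] = [forall i, b i ==> f i].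
Proof. by move=> e; apply: (@eq_forallb 'I_d) => i; rewrite e. Qed.

Theorem corollaryC4 (n d r : nat) (Kt Mt : {set pstring n})
    (b : 'I_d -> pstring n) :
  pauli_cartan Kt Mt ->
  (forall i, b i \in Mt) ->
  (forall i j, ~~ anticomm (b i) (b j)) ->
  (forall i j, connect (frustration Kt Mt) (b i) (b j)) ->
  2 <= r -> r <= d ->
  ktil Kt b (pred1 r.-1) (upto (r - 2)) != set0 ->
  ktil Kt b (pred1 r) (upto (r - 2)) != set0 ->
  #|ktil Kt b (pred1 r.-1) (upto (r - 2))| = #|ktil Kt b (pred1 r) (upto (r - 2))|
  /\ #|ktil Kt b (pred1 r.-1) (predU (upto (r - 2)) (pred1 r))|
     = #|ktil Kt b (pred1 r) (upto r.-1)|.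
Proof.
move=> hcart bM bb hconn r2 rd hA hB.
have hc := hcart; case: hc => disj nid KK MM KM.
have r2d : r - 2 < d by lia.
have r1d : r - 1 < d by lia.
set iu := Ordinal r2d; set iv := Ordinal r1d.
set u := b iu; set v := b iv.
set g := Kt :|: Mt.
pose FP s := [forall i : 'I_d, (i < r - 2) ==> ~~ anticomm s (b i)].
have ia (i : 'I_d) : (i.+1 \in pred1 r.-1) = (i == iu).
  by rewrite inE /= -val_eqE /=; apply/eqP/eqP; lia.
have ib (i : 'I_d) : (i.+1 \in pred1 r) = (i == iv).
  by rewrite inE /= -val_eqE /=; apply/eqP/eqP; lia.
have ic (i : 'I_d) : (i.+1 \in upto (r - 2)) = (i < r - 2).
  by rewrite /upto unfold_in /=.
have id (i : 'I_d) : (i.+1 \in predU (upto (r - 2)) (pred1 r)) = (i < r - 2) || (i == iv).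
  by rewrite -ic -ib.
have ie (i : 'I_d) : (i.+1 \in upto r.-1) = (i < r - 2) || (i == iu).
  by rewrite /upto unfold_in /= -val_eqE /=; apply/idP/idP; lia.
have fa (f : 'I_d -> bool) : [forall i : 'I_d, (i.+1 \in pred1 r.-1) ==> f i] = f iu.
  by rewrite -(forall1 iu f); apply: (@eq_forallb 'I_d) => i; rewrite ia.
have fb (f : 'I_d -> bool) : [forall i : 'I_d, (i.+1 \in pred1 r) ==> f i] = f iv.
  by rewrite -(forall1 iv f); apply: (@eq_forallb 'I_d) => i; rewrite ib.
have fc (f : 'I_d -> bool) : [forall i : 'I_d, (i.+1 \in upto (r - 2)) ==> f i] = [forall i : 'I_d, (i < r - 2) ==> f i].
  by apply: (@eq_forallb 'I_d) => i; rewrite ic.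
have fd (f : 'I_d -> bool) : [forall i : 'I_d, (i.+1 \in predU (upto (r - 2)) (pred1 r)) ==> f i]
    = [forall i : 'I_d, (i < r - 2) ==> f i] && f iv.
  by rewrite -(forall1 iv f); apply: (forallU (a := fun i : 'I_d => i.+1 \in predU (upto (r - 2)) (pred1 r))).
have fe (f : 'I_d -> bool) : [forall i : 'I_d, (i.+1 \in upto r.-1) ==> f i]
    = [forall i : 'I_d, (i < r - 2) ==> f i] && f iu.
  by rewrite -(forall1 iu f); apply: (forallU (a := fun i : 'I_d => i.+1 \in upto r.-1)).
have eA1 : ktil Kt b (pred1 r.-1) (upto (r - 2)) =
    [set s in Kt | [&& anticomm s u, (fun _ => true) (anticomm s v) & FP s]].
  by apply/setP => s; rewrite !inE fa fc.
have eB1 : ktil Kt b (pred1 r) (upto (r - 2)) =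
    [set s in Kt | [&& anticomm s v, (fun _ => true) (anticomm s u) & FP s]].
  by apply/setP => s; rewrite !inE fb fc.
have eA2 : ktil Kt b (pred1 r.-1) (predU (upto (r - 2)) (pred1 r)) =
    [set s in Kt | [&& anticomm s u, negb (anticomm s v) & FP s]].
  by apply/setP => s; rewrite !inE fa fd /FP; congr (_ && (_ && _)); rewrite andbC.
have eB2 : ktil Kt b (pred1 r) (upto r.-1) =
    [set s in Kt | [&& anticomm s v, negb (anticomm s u) & FP s]].
  by apply/setP => s; rewrite !inE fb fe /FP; congr (_ && (_ && _)); rewrite andbC.
have uM : u \in Mt := bM iu.
have vM : v \in Mt := bM iv.
have uv : ~~ anticomm u v := bb iu iv.
have gcl s t : s \in g -> t \in g -> anticomm s t -> pmul s t \in g.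
  rewrite !inE => /orP[sK|sM] /orP[tK|tM] st.
  - by rewrite KK.
  - by rewrite KM ?orbT.
  - by rewrite pmulC KM ?orbT // acC.
  - by rewrite MM.
pose Xj j := [set s in g | [forall i : 'I_d, (i < j) ==> ~~ anticomm s (b i)]].
have XjE j s : (s \in Xj j) = (s \in g) && [forall i : 'I_d, (i < j) ==> ~~ anticomm s (b i)].
  by rewrite in_set.
have Xcl j s t : s \in Xj j -> t \in Xj j -> anticomm s t -> pmul s t \in Xj j.
  rewrite !XjE => /andP[sg sF] /andP[tg tF] st; rewrite gcl //=.
  apply/forallP => i; apply/implyP => hi.
  by rewrite acMl (negbTE (implyP (forallP sF i) hi)) (negbTE (implyP (forallP tF i) hi)).
have bFP k : FP (b k) by apply/forallP => i; apply/implyP => _; rewrite bb.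
have bg k : b k \in g by rewrite inE bM orbT.
have XjF j s : j <= r - 2 -> s \in g -> FP s -> s \in Xj j.
  move=> hj sg sF; rewrite XjE sg; apply/forallP => i; apply/implyP => hi.
  exact: (implyP (forallP sF i)) (leq_trans hi hj).
move: hA hB; rewrite eA1 eB1 => /set0Pn[c] /[!inE] /= /and3P[cK cu cF].
move=> /set0Pn[c'] /[!inE] /= /and3P[c'K c'v c'F].
have cg : c \in g by rewrite inE cK.
have c'g : c' \in g by rewrite inE c'K.
have conn j : j <= r - 2 -> connect (er (Xj j)) u v.
  elim: j => [_|j IH hj].
    have X0 s : (s \in Xj 0) = (s \in g).
      rewrite XjE; case: (s \in g); last by [].
      by rewrite andTb; apply/forallP => i; rewrite ltn0.
    have E0 : er (Xj 0) =2 frustration Kt Mt by move=> s t; rewrite /er !X0.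
    rewrite (eq_connect E0); exact: hconn.
  have jd : j < d.
    by apply: leq_trans hj _; apply: leq_trans (leq_subr 2 r) rd.
  apply: (conn_restrict (bb := b (Ordinal jd))).
  - exact: Xcl.
  - by rewrite XjE bg; apply/forallP => i; apply/implyP => _; rewrite bb.
  - move=> s; rewrite !XjE -andbA; congr andb.
    rewrite (forallU (b := fun i : 'I_d => i < j) (c := fun i => i == Ordinal jd)) ?forall1 //.
    by move=> i; rewrite -val_eqE /= ltnS leq_eqVlt orbC.
  - exact: (XjF _ _ hj (bg iu) (bFP iu)).
  - exact: (XjF _ _ hj (bg iv) (bFP iv)).
  - by exists c; rewrite /er (XjF _ _ hj (bg iu) (bFP iu)) (XjF _ _ hj cg cF) acC.
  - by exists c'; rewrite /er (XjF _ _ hj (bg iv) (bFP iv)) (XjF _ _ hj c'g c'F) acC.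
  - exact: IH (ltnW hj).
have connX := conn (r - 2) (leqnn _).
set X := Xj (r - 2) in connX.
have [e [eK eu ev eF]] : exists e, [/\ e \in Kt, anticomm e u, anticomm e v & FP e].
  case: (boolP [exists e, [&& e \in Kt, anticomm e u, anticomm e v & FP e]]).
    by case/existsP => e /and4P[]; exists e.
  move=> hne; exfalso.
  have no11 s : s \in X -> anticomm s u -> anticomm s v -> False.
    rewrite XjE => /andP[sg sF] su sv; move: hne; apply/negP; rewrite negbK; apply/existsP.
    case/setUP: sg => [sK|sM]; first by exists s; rewrite sK su sv.
    exists (pmul s u); rewrite MM //= acMl su acss /= acMl sv (negbTE uv) /=.
    apply/forallP => i; apply/implyP => hi.
    by rewrite acMl (negbTE (implyP (forallP sF i) hi)) (negbTE (bb iu i)).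
  have c'u : ~~ anticomm c' u.
    apply/negP => c'u; move: hne; apply/negP; rewrite negbK; apply/existsP.
    by exists c'; rewrite c'K c'u c'v.
  pose Y := [pred s | [&& s \in X, ~~ anticomm s v &
     [forall y, ((y \in X) && anticomm y v && ~~ anticomm y u) ==> ~~ anticomm s y]]].
  have cl : closed (er X) Y.
    apply: (intro_closed (er_csym X)) => s t /and3P[sX tX st] /and3P[_ sv sY].
    have tv : ~~ anticomm t v.
      apply/negP => tv; case tu: (anticomm t u); first exact: no11 tX tu tv.
      by have := implyP (forallP sY t); rewrite tX tv tu st => /(_ isT).
    apply/and3P; split => //; apply/forallP => y; apply/implyP => /andP[/andP[yX yv] yu]; apply/negP => ty.
    have tyX : pmul t y \in X by exact: Xcl.
    case tu: (anticomm t u).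
      by apply: (no11 _ tyX); rewrite acMl ?tu ?(negbTE yu) ?(negbTE tv) ?yv.
    have := implyP (forallP sY (pmul t y)).
    rewrite tyX !acMl (negbTE tv) yv tu (negbTE yu) /= => /(_ isT).
    rewrite acMr st; have := implyP (forallP sY y); rewrite yX yv yu /= => /(_ isT) /negbTE ->.
    by [].
  have uX : u \in X := XjF _ _ (leqnn _) (bg iu) (bFP iu).
  have vX : v \in X := XjF _ _ (leqnn _) (bg iv) (bFP iv).
  have c'X : c' \in X := XjF _ _ (leqnn _) c'g c'F.
  have Yu : u \in Y.
    apply/and3P; split => //.
    by apply/forallP => y; apply/implyP => /andP[_ yu]; rewrite acC.
  have Yv : v \notin Y.
    apply/negP => /and3P[_ _ h]; have := implyP (forallP h c').
    by rewrite c'X c'v c'u acC c'v => /(_ isT).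
  have := closed_connect cl connX; rewrite Yu => /esym vY.
  by move: Yv; rewrite vY.
have hw (i : 'I_d) : i < r - 2 -> [&& ~~ anticomm (b i) e, ~~ anticomm (b i) u & ~~ anticomm (b i) v].
  by move=> hi; rewrite acC (implyP (forallP eF i) hi) !bb.
have hw' (i : 'I_d) : i < r - 2 -> [&& ~~ anticomm (b i) e, ~~ anticomm (b i) v & ~~ anticomm (b i) u].
  by move=> hi; rewrite acC (implyP (forallP eF i) hi) !bb.
have vu : ~~ anticomm v u by rewrite acC.
split; apply/eqP; rewrite eqn_leq; apply/andP; split.
- exact: (@swap_le n Kt Mt 'I_d b (fun i : 'I_d => i < r - 2) u v e (fun _ => true) hcart eK uM vM eu ev uv hw).
- exact: (@swap_le n Kt Mt 'I_d b (fun i : 'I_d => i < r - 2) v u e (fun _ => true) hcart eK vM uM ev eu vu hw').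
- rewrite eA2 eB2; exact: (@swap_le n Kt Mt 'I_d b (fun i : 'I_d => i < r - 2) u v e negb hcart eK uM vM eu ev uv hw).
- rewrite eA2 eB2; exact: (@swap_le n Kt Mt 'I_d b (fun i : 'I_d => i < r - 2) v u e negb hcart eK vM uM ev eu vu hw').
Qed.
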